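(* Let $l\ge-\tfrac12$. There exist constants $A_1,A_2$ depending only on $l$ such that for all $0<\eta<\xi$: $$\int_\eta^\xi V_1(z;\xi,\eta)\,z^{l-\frac12}\,dz\le A_1(\xi-\eta)^{l+\frac12},\qquad\int_0^\eta V_2(z;\xi,\eta)\,z^{l-\frac12}\,dz\le A_2(\xi-\eta)^{l+\frac12}.$$
   Context: Let ${}_2F_1$ denote the Gauss hypergeometric function (analytically continued to $(-\infty,0)$). For $0<\eta<z<\xi$ put $\sigma_1=\frac{(z-\xi)\eta}{(z-\eta)\xi}$ and $V_1(z;\xi,\eta)=\frac{(z-\eta)^l\xi^l}{z^{2l}}\left|{}_2F_1(-l,-l;1;\sigma_1)\right|$. For $0<z<\eta<\xi$ put $\sigma_2=-\frac{z(\xi-\eta)}{\xi(\eta-z)}$ and $V_2(z;\xi,\eta)=\frac{|\sin(\pi l)|\Gamma^2(1+l)}{\pi\Gamma(2+2l)}\frac{(\xi-\eta)^{1+2l}z}{\xi^{l+1}(\eta-z)^{l+1}}\left|{}_2F_1(1+l,1+l;2+2l;\sigma_2)\right|$. *)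

(* Defs.v *)
From Stdlib Require Import Reals Arith ClassicalEpsilon.
From Stdlib Require Import Factorial.
Open Scope R_scope.

Fixpoint poch (a : R) (n : nat) : R :=
  match n with
  | O => 1
  | S k => poch a k * (a + INR k)
  end.

Definition hyp_term (a b c x : R) (n : nat) : R :=
  poch a n * poch b n / (poch c n * INR (fact n)) * x ^ n.

(* Sum of the hypergeometric series (chosen limit; it exists for |x| < 1
   when c is not a non-positive integer). *)
Definition hyp_series (a b c x : R) : R :=
  epsilon (inhabits 0) (fun s => infinite_sum (hyp_term a b c x) s).

(* Gauss hypergeometric function 2F1(a,b;c;x) for x < 1: the series on [0,1),
   and its analytic continuation to (-oo,0) given by the Pfaff transformation
   2F1(a,b;c;x) = (1-x)^(-a) 2F1(a,c-b;c;x/(x-1)), with x/(x-1) in (0,1). *)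
Definition hyp2F1 (a b c x : R) : R :=
  if Rlt_dec x 0
  then Rpower (1 - x) (- a) * hyp_series a (c - b) c (x / (x - 1))
  else hyp_series a b c x.

(* Euler's Gamma function for x > 0, via the Euler/Gauss limit
   Gamma(x) = lim n! n^x / (x (x+1) ... (x+n)). *)
Definition Gamma (x : R) : R :=
  epsilon (inhabits 0)
    (fun g => Un_cv (fun n => INR (fact n) * Rpower (INR n) x / poch x (S n)) g).

Definition sigma1 (z xi eta : R) : R := (z - xi) * eta / ((z - eta) * xi).

Definition V1 (l z xi eta : R) : R :=
  Rpower (z - eta) l * Rpower xi l / Rpower z (2 * l)
  * Rabs (hyp2F1 (- l) (- l) 1 (sigma1 z xi eta)).

Definition sigma2 (z xi eta : R) : R := - (z * (xi - eta)) / (xi * (eta - z)).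

Definition V2 (l z xi eta : R) : R :=
  Rabs (sin (PI * l)) * (Gamma (1 + l))^2 / (PI * Gamma (2 + 2 * l))
  * (Rpower (xi - eta) (1 + 2 * l) * z
     / (Rpower xi (l + 1) * Rpower (eta - z) (l + 1)))
  * Rabs (hyp2F1 (1 + l) (1 + l) (2 + 2 * l) (sigma2 z xi eta)).

(* Main.v *)
Require Import Defs.
From Stdlib Require Import Reals Lra Lia Psatz ClassicalEpsilon Factorial.
From Coquelicot Require Import Coquelicot.
Open Scope R_scope.

Definition Lsum (y : R) (N : nat) := sum_f_R0 (fun k => y^(S k) / INR (S k)) N.

Lemma Lsum_derive y N : is_derive (fun y => Lsum y N) y (sum_f_R0 (fun k => y^k) N).
Proof.
  induction N as [|N IH].
  - unfold Lsum; simpl. auto_derive; auto. lra.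
  - apply is_derive_ext with (fun y => Lsum y N + y^(S (S N)) / INR (S (S N))).
    { intros; reflexivity. }
    change (sum_f_R0 (fun k : nat => y ^ k) (S N)) with
      (sum_f_R0 (fun k : nat => y ^ k) N + y^(S N)).
    refine (is_derive_plus (fun y => Lsum y N) (fun y => y^(S (S N)) / INR (S (S N))) _ _ _ IH _).
    auto_derive. exact I.
    replace (match N with 0%nat => 1 | S _ => INR N + 1 end) with (INR (S N)) by reflexivity.
    simpl pow. field. pose proof (pos_INR (S N)). lra.
Qed.

Lemma Lsum0 N : Lsum 0 N = 0.
Proof. induction N; unfold Lsum in *. simpl; lra.
  change (sum_f_R0 (fun k : nat => 0 ^ S k / INR (S k)) N + 0 ^ S (S N) / INR (S (S N)) = 0).
  rewrite IHN. simpl. lra. Qed.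

Lemma isqrt_derive t : t < 1 ->
  is_derive (fun t => 3 / sqrt (1 - t)) t (3 / (2 * ((1-t) * sqrt (1-t)))).
Proof.
  intros Ht. assert (Hs : 0 < sqrt (1 - t)) by (apply sqrt_lt_R0; lra).
  auto_derive. replace (1 + - t) with (1 - t) by ring. repeat split; lra.
  replace (1 + - t) with (1 - t) by ring.
  rewrite sqrt_sqrt by lra. field. lra.
Qed.

Lemma Lsum_bound y N : 0 <= y < 1 -> Lsum y N <= 3 / sqrt (1 - y).
Proof.
  intros [H0 H1]. destruct (Req_dec y 0) as [->|Hy].
  { rewrite Lsum0. apply Rlt_le, Rdiv_lt_0_compat. lra. apply sqrt_lt_R0; lra. }
  assert (Hlt : 0 < y) by lra.
  set (h := fun t => 3 / sqrt (1 - t) - Lsum t N).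
  assert (Hinc : h 0 < h y).
  { apply (incr_function_le h (Finite 0) (Finite y)
      (fun t => 3 / (2 * ((1-t) * sqrt (1-t))) - sum_f_R0 (fun k => t^k) N)); simpl; try lra.
    - intros t Ha Hb. unfold h. apply (is_derive_minus (fun t => 3 / sqrt (1 - t)) (fun t => Lsum t N)).
      apply isqrt_derive; lra. apply Lsum_derive.
    - intros t Ha Hb.
      assert (Hs : 0 < sqrt (1 - t)) by (apply sqrt_lt_R0; lra).
      assert (Hs1 : sqrt (1 - t) <= 1).
      { assert (HH : sqrt (1-t) <= sqrt 1) by (apply sqrt_le_1_alt; lra). rewrite sqrt_1 in HH. exact HH. }
      assert (Hsum : sum_f_R0 (fun k => t^k) N <= 1 / (1 - t)).
      { rewrite tech3 by lra.
        assert (0 <= t ^ S N) by (apply pow_le; lra).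
        unfold Rdiv. apply Rmult_le_compat_r. apply Rlt_le, Rinv_0_lt_compat; lra. lra. }
      apply Rlt_gt, Rlt_Rminus. eapply Rle_lt_trans. exact Hsum.
      assert (0 < 1 - t) by lra.
      apply Rmult_lt_reg_r with (2 * ((1-t) * sqrt (1 - t))). nra.
      field_simplify; try lra. }
  unfold h in Hinc. rewrite Lsum0 in Hinc. replace (1 - 0) with 1 in Hinc by ring. rewrite sqrt_1 in Hinc. lra.
Qed.

Definition coef (a b c : R) (n : nat) := poch a n * poch b n / (poch c n * INR (fact n)).

Lemma poch_pos c n : 0 < c -> 0 < poch c n.
Proof. intros Hc; induction n; simpl. lra. pose proof (pos_INR n). nra. Qed.

Lemma coef_S a b c n : 0 < c ->
  coef a b c (S n) = coef a b c n * ((a + INR n) * (b + INR n) / ((c + INR n) * (INR n + 1))).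
Proof.
  intros Hc. unfold coef. simpl poch. rewrite fact_simpl, mult_INR, S_INR.
  pose proof (poch_pos c n Hc). pose proof (pos_INR n). pose proof (INR_fact_lt_0 n).
  field. repeat split; lra.
Qed.

Lemma sum_ge_term (f : nat -> R) m N : (forall k, 0 <= f k) -> (m <= N)%nat -> f m <= sum_f_R0 f N.
Proof.
  intros Hf Hm. induction N.
  - inversion Hm. simpl. lra.
  - destruct (Nat.eq_dec m (S N)) as [->|Hne].
    + simpl. pose proof (cond_pos_sum f N Hf). lra.
    + simpl. assert (m <= N)%nat by lia. specialize (IHN H). pose proof (Hf (S N)). lra.
Qed.

Lemma coef_decay a b c s K0 : 0 < c -> 0 <= s ->
  (forall k, (K0 <= k)%nat -> Rabs (a + INR k) * Rabs (b + INR k) * (INR k + 2 + s)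
       <= (c + INR k) * (INR k + 1) * (INR k + 1 + s)) ->
  exists M, 0 <= M /\ forall n, Rabs (coef a b c (S n)) <= M / INR (S n).
Proof.
  intros Hc Hs Hr.
  set (D := Rabs (coef a b c K0) * (INR K0 + 1 + s)).
  assert (Step : forall n, (K0 <= n)%nat -> Rabs (coef a b c n) * (INR n + 1 + s) <= D).
  { induction n; intros Hn.
    - assert (K0 = 0%nat) by lia. subst K0. unfold D. lra.
    - destruct (Nat.eq_dec K0 (S n)) as [<-|Hne]. unfold D; lra.
      assert (HK : (K0 <= n)%nat) by lia. specialize (IHn HK).
      rewrite coef_S by exact Hc. rewrite Rabs_mult.
      pose proof (pos_INR n). specialize (Hr n HK).
      assert (Hd : 0 < (c + INR n) * (INR n + 1)) by nra.
      rewrite Rabs_div by lra. rewrite (Rabs_right ((c + INR n) * (INR n + 1))) by lra.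
      rewrite Rabs_mult. rewrite S_INR.
      apply Rle_trans with (Rabs (coef a b c n) * (INR n + 1 + s)); [|exact IHn].
      rewrite Rmult_assoc. apply Rmult_le_compat_l. apply Rabs_pos.
      apply Rmult_le_reg_r with ((c + INR n) * (INR n + 1)). exact Hd.
      field_simplify; try lra; try (replace (INR n + 1 + 1 + s) with (INR n + 2 + s) by ring; lra). }
  set (S0 := sum_f_R0 (fun m => INR m * Rabs (coef a b c m)) K0).
  assert (HS0 : 0 <= S0).
  { apply cond_pos_sum. intros k. pose proof (pos_INR k). pose proof (Rabs_pos (coef a b c k)). nra. }
  assert (HD : 0 <= D).
  { unfold D. pose proof (pos_INR K0). pose proof (Rabs_pos (coef a b c K0)). nra. }
  exists (D + S0). split. lra.
  intros n. assert (HnP : 0 < INR (S n)) by (apply lt_0_INR; lia).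
  destruct (Compare_dec.le_lt_dec K0 (S n)) as [HK|HK].
  - specialize (Step (S n) HK).
    apply Rmult_le_reg_r with (INR (S n)). exact HnP.
    unfold Rdiv. rewrite Rmult_assoc, Rinv_l by lra.
    pose proof (Rabs_pos (coef a b c (S n))). nra.
  - assert (Ht : INR (S n) * Rabs (coef a b c (S n)) <= S0).
    { apply (sum_ge_term (fun m => INR m * Rabs (coef a b c m))).
      intros k. pose proof (pos_INR k). pose proof (Rabs_pos (coef a b c k)). nra. lia. }
    apply Rmult_le_reg_r with (INR (S n)). exact HnP.
    unfold Rdiv. rewrite Rmult_assoc, Rinv_l by lra. lra.
Qed.

Lemma hs_bound a b c s K0 : 0 < c -> 0 <= s ->
  (forall k, (K0 <= k)%nat -> Rabs (a + INR k) * Rabs (b + INR k) * (INR k + 2 + s)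
       <= (c + INR k) * (INR k + 1) * (INR k + 1 + s)) ->
  exists M', 0 <= M' /\ forall y, 0 <= y < 1 -> Rabs (hyp_series a b c y) <= M' / sqrt (1 - y).
Proof.
  intros Hc Hs Hr. destruct (coef_decay a b c s K0 Hc Hs Hr) as [M [HM HMb]].
  exists (1 + 3 * M). split. lra.
  intros y [Hy0 Hy1].
  set (t := hyp_term a b c y).
  assert (Ht : forall n, t n = coef a b c n * y ^ n) by (intros; reflexivity).
  assert (Ht0 : Rabs (t 0%nat) = 1).
  { rewrite Ht. unfold coef. simpl. rewrite Rabs_right; lra. }
  assert (HtS : forall n, Rabs (t (S n)) <= M * (y ^ (S n) / INR (S n))).
  { intros n. rewrite Ht, Rabs_mult, (Rabs_right (y ^ S n)) by (apply Rle_ge, pow_le; lra).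
    specialize (HMb n). assert (0 <= y ^ S n) by (apply pow_le; lra).
    assert (HnP : 0 < INR (S n)) by (apply lt_0_INR; lia).
    unfold Rdiv in *. replace (M * (y ^ S n * / INR (S n))) with (M * / INR (S n) * y ^ S n) by ring.
    apply Rmult_le_compat_r; lra. }
  assert (Hsq : 0 < sqrt (1 - y)) by (apply sqrt_lt_R0; lra).
  assert (Hsq1 : sqrt (1 - y) <= 1).
  { assert (HH : sqrt (1-y) <= sqrt 1) by (apply sqrt_le_1_alt; lra). rewrite sqrt_1 in HH. exact HH. }
  set (B := 1 + M * (3 / sqrt (1 - y))).
  assert (Hpart : forall N, sum_f_R0 (fun n => Rabs (t n)) N <= B).
  { assert (P : forall N, sum_f_R0 (fun n => Rabs (t n)) (S N) <= 1 + M * Lsum y N).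
    { induction N.
      - simpl sum_f_R0. unfold Lsum. simpl sum_f_R0. rewrite Ht0. specialize (HtS 0%nat). simpl in HtS. lra.
      - change (sum_f_R0 (fun n => Rabs (t n)) (S N) + Rabs (t (S (S N))) <= 1 + M * (Lsum y N + y ^ S (S N) / INR (S (S N)))).
        specialize (HtS (S N)). nra. }
    intros N. pose proof (Lsum_bound y N (conj Hy0 Hy1)).
    assert (sum_f_R0 (fun n => Rabs (t n)) N <= sum_f_R0 (fun n => Rabs (t n)) (S N)).
    { simpl. pose proof (Rabs_pos (t (S N))). lra. }
    specialize (P N). unfold B. nra. }
  assert (Hex : ex_series (fun n => Rabs (t n))).
  { apply (ex_series_le (fun n => Rabs (t n)) (fun n => (M + 1) * y ^ n)).
    - intros n. unfold norm; simpl. unfold abs; simpl. rewrite Rabs_Rabsolu.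
      destruct n. rewrite Ht0. simpl. lra.
      eapply Rle_trans. apply HtS.
      assert (0 <= y ^ S n) by (apply pow_le; lra).
      assert (HnP : 1 <= INR (S n)) by (apply (le_INR 1); lia).
      assert (y ^ S n / INR (S n) <= y ^ S n).
      { unfold Rdiv. rewrite <- (Rmult_1_r (y ^ S n)) at 2. apply Rmult_le_compat_l. lra.
        rewrite <- Rinv_1. apply Rinv_le_contravar; lra. }
      nra.
    - apply (ex_series_scal_l (M + 1) (fun n => y ^ n)). apply ex_series_geom.
      rewrite Rabs_right; lra. }
  assert (HL : Series (fun n => Rabs (t n)) <= B).
  { pose proof (Series_correct _ Hex) as HC.
    assert (Hle := is_lim_seq_le (sum_n (fun n => Rabs (t n))) (fun _ => B) (Series (fun n => Rabs (t n))) B).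
    simpl in Hle. apply Hle.
    - intros n. rewrite sum_n_Reals. apply Hpart.
    - exact HC.
    - apply is_lim_seq_const. }
  assert (Hex2 : ex_series t) by (apply ex_series_Rabs; exact Hex).
  assert (Hhs : hyp_series a b c y = Series t).
  { unfold hyp_series. apply uniqueness_sum with t.
    - apply epsilon_spec. exists (Series t). apply is_series_Reals. apply Series_correct. exact Hex2.
    - apply is_series_Reals. apply Series_correct. exact Hex2. }
  rewrite Hhs. eapply Rle_trans. apply Series_Rabs. exact Hex. eapply Rle_trans. exact HL.
  unfold B. unfold Rdiv. apply Rmult_le_reg_r with (sqrt (1 - y)). exact Hsq.
  field_simplify; try lra.
Qed.

Lemma sqrt_exp p : 0 < p -> sqrt p = exp (/2 * ln p).
Proof. intros. rewrite <- Rpower_sqrt by auto. reflexivity. Qed.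

Lemma pt_y x : x < 0 -> 0 <= x / (x - 1) < 1 /\ sqrt (1 - x / (x - 1)) = / sqrt (1 - x).
Proof.
  intros Hx. split. split.
  - apply Rlt_le. apply Rdiv_neg_neg; lra.
  - apply Rmult_lt_reg_r with (1 - x). lra. unfold Rdiv.
    replace (x * / (x - 1) * (1 - x)) with (- x) by (field; lra). lra.
  - replace (1 - x / (x - 1)) with (/ (1 - x)) by (field; lra).
    rewrite sqrt_inv. reflexivity.
Qed.

Lemma V1_pt l M eta xi z : 0 < eta -> eta < z < xi -> 0 <= M ->
  (forall y, 0 <= y < 1 -> Rabs (hyp_series (-l) (1 - - l) 1 y) <= M / sqrt (1 - y)) ->
  V1 l z xi eta * Rpower z (l - 1/2) <= M * Rpower (xi - eta) (l + 1/2) / sqrt xi / sqrt (z - eta).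
Proof.
  intros He [Hz1 Hz2] HM Hb.
  set (x := sigma1 z xi eta).
  assert (Hx : x < 0).
  { unfold x, sigma1. apply Rdiv_neg_pos. nra. nra. }
  assert (Hx1 : 1 - x = z * (xi - eta) / ((z - eta) * xi)).
  { unfold x, sigma1. field. lra. }
  destruct (pt_y x Hx) as [Hy Hsq].
  specialize (Hb _ Hy). rewrite Hsq in Hb.
  assert (Hsx : 0 < sqrt (1 - x)) by (apply sqrt_lt_R0; lra).
  replace (M / / sqrt (1 - x)) with (M * sqrt (1 - x)) in Hb by (field; lra).
  unfold V1. fold x. unfold hyp2F1. destruct (Rlt_dec x 0) as [_|Hn]; [|lra].
  rewrite Rabs_mult, (Rabs_right (Rpower _ _)) by (apply Rle_ge, Rlt_le, exp_pos).
  set (H := hyp_series (- l) (1 - - l) 1 (x / (x - 1))) in *.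
  assert (Key : Rpower (z - eta) l * Rpower xi l / Rpower z (2 * l) * Rpower (1 - x) (- - l)
       * sqrt (1 - x) * Rpower z (l - 1/2)
       = Rpower (xi - eta) (l + 1/2) / sqrt xi / sqrt (z - eta)).
  { rewrite !sqrt_exp by (try lra; nra). unfold Rpower. rewrite Hx1.
    rewrite ln_div by (try nra). rewrite !ln_mult by lra.
    unfold Rdiv. rewrite <- !exp_Ropp. rewrite <- !exp_plus. f_equal. ring. }
  assert (Hpos : 0 <= Rpower (z - eta) l * Rpower xi l / Rpower z (2 * l) * Rpower (1 - x) (- - l)
       * Rpower z (l - 1/2)).
  { unfold Rpower. pose proof (exp_pos (l * ln (z - eta))). pose proof (exp_pos (l * ln xi)).
    pose proof (exp_pos (2 * l * ln z)). pose proof (exp_pos (- - l * ln (1 - x))).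
    pose proof (exp_pos ((l - 1/2) * ln z)).
    apply Rlt_le. repeat apply Rmult_lt_0_compat; try assumption. apply Rinv_0_lt_compat; assumption. }
  replace (M * Rpower (xi - eta) (l + 1/2) / sqrt xi / sqrt (z - eta))
    with (M * (Rpower (xi - eta) (l + 1/2) / sqrt xi / sqrt (z - eta))) by (unfold Rdiv; ring).
  rewrite <- Key.
  replace (Rpower (z - eta) l * Rpower xi l / Rpower z (2 * l) * (Rpower (1 - x) (- - l) * Rabs H) * Rpower z (l - 1 / 2))
   with ((Rpower (z - eta) l * Rpower xi l / Rpower z (2 * l) * Rpower (1 - x) (- - l) * Rpower z (l - 1/2)) * Rabs H) by ring.
  replace (M * (Rpower (z - eta) l * Rpower xi l / Rpower z (2 * l) * Rpower (1 - x) (- - l) * sqrt (1 - x) * Rpower z (l - 1 / 2)))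
   with ((Rpower (z - eta) l * Rpower xi l / Rpower z (2 * l) * Rpower (1 - x) (- - l) * Rpower z (l - 1/2)) * (M * sqrt (1 - x))) by ring.
  apply Rmult_le_compat_l; assumption.
Qed.

Definition K2 (l : R) := Rabs (sin (PI * l)) * (Gamma (1 + l))^2 / (PI * Gamma (2 + 2 * l)).

Lemma V2_pt l M eta xi z : -1/2 <= l -> 0 < z < eta -> eta < xi -> 0 <= M ->
  (forall y, 0 <= y < 1 -> Rabs (hyp_series (1 + l) (2 + 2 * l - (1 + l)) (2 + 2 * l) y) <= M / sqrt (1 - y)) ->
  V2 l z xi eta * Rpower z (l - 1/2) <= Rabs (K2 l) * M * (Rpower (xi - eta) (l + 1/2) / sqrt xi / sqrt (eta - z)).
Proof.
  intros hl [Hz1 Hz2] Hxi HM Hb.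
  set (x := sigma2 z xi eta).
  assert (Hx : x < 0).
  { unfold x, sigma2. unfold Rdiv. rewrite Ropp_mult_distr_l. apply Rmult_neg_pos.
    nra. apply Rinv_0_lt_compat. nra. }
  assert (Hx1 : 1 - x = eta * (xi - z) / (xi * (eta - z))).
  { unfold x, sigma2. field. lra. }
  destruct (pt_y x Hx) as [Hy Hsq].
  specialize (Hb _ Hy). rewrite Hsq in Hb.
  assert (Hsx : 0 < sqrt (1 - x)) by (apply sqrt_lt_R0; lra).
  replace (M / / sqrt (1 - x)) with (M * sqrt (1 - x)) in Hb by (field; lra).
  unfold V2. fold (K2 l). fold x. unfold hyp2F1. destruct (Rlt_dec x 0) as [_|Hn]; [|lra].
  rewrite Rabs_mult, (Rabs_right (Rpower _ _)) by (apply Rle_ge, Rlt_le, exp_pos).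
  set (H := hyp_series (1 + l) (2 + 2 * l - (1 + l)) (2 + 2 * l) (x / (x - 1))) in *.
  set (P := Rpower (xi - eta) (1 + 2 * l) * z / (Rpower xi (l + 1) * Rpower (eta - z) (l + 1))).
  set (w := (xi - eta) * z / (eta * (xi - z))).
  set (G := Rpower (xi - eta) (l + 1/2) / sqrt xi / sqrt (eta - z)).
  assert (Key : P * Rpower (1 - x) (- (1 + l)) * sqrt (1 - x) * Rpower z (l - 1/2)
       = G * Rpower w (l + 1/2)).
  { unfold P, G, w. rewrite !sqrt_exp by (try lra; nra). rewrite <- (exp_ln z) at 1 by lra.
    unfold Rpower. rewrite Hx1.
    rewrite !ln_div by (try nra). rewrite !ln_mult by lra.
    unfold Rdiv. rewrite <- !exp_plus, <- !exp_Ropp, <- !exp_plus. apply (f_equal exp). field. }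
  assert (Hw : Rpower w (l + 1/2) <= 1).
  { assert (Hw1 : 0 < w <= 1).
    { unfold w. split. apply Rdiv_lt_0_compat; nra.
      apply Rmult_le_reg_r with (eta * (xi - z)). nra. unfold Rdiv.
      rewrite Rmult_assoc, Rinv_l by nra. nra. }
    eapply Rle_trans. apply Rle_Rpower_l with (b := 1). lra. exact Hw1.
    unfold Rpower. rewrite ln_1, Rmult_0_r, exp_0. lra. }
  assert (HG : 0 <= G).
  { unfold G. unfold Rdiv. apply Rmult_le_pos. apply Rmult_le_pos.
    apply Rlt_le, exp_pos. apply Rlt_le, Rinv_0_lt_compat, sqrt_lt_R0; lra.
    apply Rlt_le, Rinv_0_lt_compat, sqrt_lt_R0; lra. }
  assert (HQ : 0 <= P * Rpower (1 - x) (- (1 + l)) * Rpower z (l - 1/2)).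
  { unfold P, Rpower. pose proof (exp_pos ((1 + 2 * l) * ln (xi - eta))).
    pose proof (exp_pos ((l + 1) * ln xi)). pose proof (exp_pos ((l + 1) * ln (eta - z))).
    pose proof (exp_pos (- (1 + l) * ln (1 - x))). pose proof (exp_pos ((l - 1/2) * ln z)).
    apply Rlt_le. repeat apply Rmult_lt_0_compat; try assumption.
    apply Rinv_0_lt_compat. apply Rmult_lt_0_compat; assumption. }
  fold P.
  replace (K2 l * P * (Rpower (1 - x) (- (1 + l)) * Rabs H) * Rpower z (l - 1 / 2))
    with (K2 l * ((P * Rpower (1 - x) (- (1 + l)) * Rpower z (l - 1/2)) * Rabs H)) by ring.
  apply Rle_trans with (Rabs (K2 l) * ((P * Rpower (1 - x) (- (1 + l)) * Rpower z (l - 1/2)) * Rabs H)).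
  { apply Rmult_le_compat_r. apply Rmult_le_pos. exact HQ. apply Rabs_pos. apply Rle_abs. }
  rewrite (Rmult_assoc (Rabs (K2 l)) M). apply Rmult_le_compat_l. apply Rabs_pos.
  apply Rle_trans with ((P * Rpower (1 - x) (- (1 + l)) * Rpower z (l - 1/2)) * (M * sqrt (1 - x))).
  { apply Rmult_le_compat_l. exact HQ. exact Hb. }
  replace ((P * Rpower (1 - x) (- (1 + l)) * Rpower z (l - 1/2)) * (M * sqrt (1 - x)))
    with (M * (P * Rpower (1 - x) (- (1 + l)) * sqrt (1 - x) * Rpower z (l - 1/2))) by ring.
  rewrite Key. apply Rmult_le_compat_l. exact HM.
  rewrite <- (Rmult_1_r G) at 2. apply Rmult_le_compat_l; assumption.
Qed.

Lemma int_bound1 (f : R -> R) (C e a b : R) (pr : Riemann_integrable f a b) :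
  e < a -> a <= b -> 0 <= C -> (forall z, a < z < b -> f z <= C / sqrt (z - e)) ->
  RiemannInt pr <= 2 * C * (sqrt (b - e) - sqrt (a - e)).
Proof.
  intros Hea Hab HC Hf.
  set (g := fun z => C / sqrt (z - e)).
  set (F := fun z => 2 * C * sqrt (z - e)).
  assert (HF : forall z, e < z -> is_derive F z (g z)).
  { intros z Hz. unfold F, g. assert (0 < sqrt (z - e)) by (apply sqrt_lt_R0; lra).
    auto_derive. lra. replace (z + - e) with (z - e) by ring. field. lra. }
  assert (Hg : forall z, e < z -> continuous g z).
  { intros z Hz. apply (ex_derive_continuous (K := R_AbsRing) g). unfold g.
    assert (0 < sqrt (z - e)) by (apply sqrt_lt_R0; lra).
    auto_derive. replace (z + - e) with (z - e) by ring. repeat split; lra. }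
  assert (pr2 : Riemann_integrable g a b).
  { apply continuity_implies_RiemannInt. exact Hab.
    intros z Hz. apply continuity_pt_filterlim. apply Hg. lra. }
  apply Rle_trans with (RiemannInt pr2).
  { apply (RiemannInt_P19 pr pr2). exact Hab. exact Hf. }
  rewrite <- (RInt_Reals g a b pr2).
  assert (HI : is_RInt g a b (minus (F b) (F a))).
  { apply (is_RInt_derive (V := R_CompleteNormedModule) F g); intros z Hz; rewrite Rmin_left, Rmax_right in Hz by lra.
    apply HF; lra. apply Hg; lra. }
  rewrite (is_RInt_unique _ _ _ _ HI). unfold minus, plus, opp, F; simpl. lra.
Qed.

Lemma int_bound2 (f : R -> R) (C e a b : R) (pr : Riemann_integrable f a b) :
  b < e -> a <= b -> 0 <= C -> (forall z, a < z < b -> f z <= C / sqrt (e - z)) ->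
  RiemannInt pr <= 2 * C * (sqrt (e - a) - sqrt (e - b)).
Proof.
  intros Hea Hab HC Hf.
  set (g := fun z => C / sqrt (e - z)).
  set (F := fun z => - (2 * C * sqrt (e - z))).
  assert (HF : forall z, z < e -> is_derive F z (g z)).
  { intros z Hz. unfold F, g. assert (0 < sqrt (e - z)) by (apply sqrt_lt_R0; lra).
    auto_derive. lra. replace (e + - z) with (e - z) by ring. field. lra. }
  assert (Hg : forall z, z < e -> continuous g z).
  { intros z Hz. apply (ex_derive_continuous (K := R_AbsRing) g). unfold g.
    assert (0 < sqrt (e - z)) by (apply sqrt_lt_R0; lra).
    auto_derive. replace (e + - z) with (e - z) by ring. repeat split; lra. }
  assert (pr2 : Riemann_integrable g a b).
  { apply continuity_implies_RiemannInt. exact Hab.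
    intros z Hz. apply continuity_pt_filterlim. apply Hg. lra. }
  apply Rle_trans with (RiemannInt pr2).
  { apply (RiemannInt_P19 pr pr2). exact Hab. exact Hf. }
  rewrite <- (RInt_Reals g a b pr2).
  assert (HI : is_RInt g a b (minus (F b) (F a))).
  { apply (is_RInt_derive (V := R_CompleteNormedModule) F g); intros z Hz; rewrite Rmin_left, Rmax_right in Hz by lra.
    apply HF; lra. apply Hg; lra. }
  rewrite (is_RInt_unique _ _ _ _ HI). unfold minus, plus, opp, F; simpl. lra.
Qed.

Theorem corollaryA3 (l : R) (hl : -1/2 <= l) :
  exists A1 A2 : R,
    forall eta xi : R, 0 < eta -> eta < xi ->
      (forall (a b : R)
         (pr : Riemann_integrable
                 (fun z => V1 l z xi eta * Rpower z (l - 1/2)) a b),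
         eta < a -> a <= b -> b < xi ->
         RiemannInt pr <= A1 * Rpower (xi - eta) (l + 1/2)) /\
      (forall (a b : R)
         (pr : Riemann_integrable
                 (fun z => V2 l z xi eta * Rpower z (l - 1/2)) a b),
         0 < a -> a <= b -> b < eta ->
         RiemannInt pr <= A2 * Rpower (xi - eta) (l + 1/2)).
Proof.
  destruct (INR_unbounded (Rabs l + 1)) as [K1 HK1].
  assert (Hr1 : forall k, (K1 <= k)%nat ->
     Rabs (- l + INR k) * Rabs (1 - - l + INR k) * (INR k + 2 + 0)
       <= (1 + INR k) * (INR k + 1) * (INR k + 1 + 0)).
  { intros k Hk. apply le_INR in Hk. pose proof (Rle_abs l). pose proof (Rle_abs (- l)).
    rewrite Rabs_Ropp in *.
    rewrite (Rabs_right (- l + INR k)) by lra. rewrite (Rabs_right (1 - - l + INR k)) by lra.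
    pose proof (pos_INR k). nra. }
  destruct (hs_bound (- l) (1 - - l) 1 0 K1 ltac:(lra) ltac:(lra) Hr1) as [M1 [HM1 HB1]].
  destruct (INR_unbounded (l^2 * (l^2 + 2 * l + 2))) as [K2n HK2].
  assert (Hr2 : forall k, (K2n <= k)%nat ->
     Rabs (1 + l + INR k) * Rabs (2 + 2 * l - (1 + l) + INR k) * (INR k + 2 + (l + 1)^2)
       <= (2 + 2 * l + INR k) * (INR k + 1) * (INR k + 1 + (l + 1)^2)).
  { intros k Hk. apply le_INR in Hk. pose proof (pos_INR k).
    rewrite (Rabs_right (1 + l + INR k)) by lra. rewrite (Rabs_right (2 + 2 * l - (1 + l) + INR k)) by lra.
    assert (E : (2 + 2 * l + INR k) * (INR k + 1) * (INR k + 1 + (l + 1)^2)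
       - (1 + l + INR k) * (2 + 2 * l - (1 + l) + INR k) * (INR k + 2 + (l + 1)^2)
       = (INR k + 1) - l^2 * (l^2 + 2 * l + 2)) by ring.
    lra. }
  destruct (hs_bound (1 + l) (2 + 2 * l - (1 + l)) (2 + 2 * l) ((l + 1)^2) K2n
     ltac:(lra) ltac:(nra) Hr2) as [M2 [HM2 HB2]].
  exists (2 * M1), (2 * Rabs (K2 l) * M2).
  intros eta xi He Hxi.
  assert (HR : 0 <= Rpower (xi - eta) (l + 1/2)) by (apply Rlt_le, exp_pos).
  assert (Hsxi : 0 < sqrt xi) by (apply sqrt_lt_R0; lra).
  split.
  - intros a b pr Ha Hab Hb.
    set (C := M1 * Rpower (xi - eta) (l + 1/2) / sqrt xi).
    assert (HC : 0 <= C).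
    { unfold C, Rdiv. apply Rmult_le_pos. apply Rmult_le_pos; assumption.
      apply Rlt_le, Rinv_0_lt_compat; assumption. }
    eapply Rle_trans. apply (int_bound1 _ C eta a b pr Ha Hab HC).
    { intros z Hz. apply V1_pt; try lra; assumption. }
    assert (sqrt (b - eta) <= sqrt xi) by (apply sqrt_le_1_alt; lra).
    assert (0 <= sqrt (a - eta)) by apply sqrt_pos.
    apply Rle_trans with (2 * C * sqrt xi). nra.
    unfold C. right. field. lra.
  - intros a b pr Ha Hab Hb.
    set (C := Rabs (K2 l) * M2 * (Rpower (xi - eta) (l + 1/2) / sqrt xi)).
    assert (HC : 0 <= C).
    { unfold C, Rdiv. apply Rmult_le_pos. apply Rmult_le_pos. apply Rabs_pos. assumption.
      apply Rmult_le_pos. assumption. apply Rlt_le, Rinv_0_lt_compat; assumption. }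
    eapply Rle_trans. apply (int_bound2 _ C eta a b pr Hb Hab HC).
    { intros z Hz. eapply Rle_trans. apply (V2_pt l M2); try lra; assumption.
      unfold C. right. unfold Rdiv. ring. }
    assert (sqrt (eta - a) <= sqrt xi) by (apply sqrt_le_1_alt; lra).
    assert (0 <= sqrt (eta - b)) by apply sqrt_pos.
    apply Rle_trans with (2 * C * sqrt xi). nra.
    unfold C. right. field. lra.
Qed.
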